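(* For every integer $h\ge2$, the numerical semigroup $\Gamma_{A_h}=\langle h(h+1),\,h(h+1)+1,\,(h+1)^2,\,(h+1)^2+1\rangle$ is homogeneous.
   Context: For a numerical semigroup $\Gamma=\langle n_1,\dots,n_e\rangle$ (minimally generated, here with $n_1=h(h+1)$) and $0\neq s\in\Gamma$, the set of lengths is $\mathcal T(s)=\{\sum_i r_i : s=\sum_i r_in_i,\ r_i\in\mathbb{N}\}$. A subset $T\subset\Gamma$ is homogeneous if it is empty or $\mathcal T(s)$ is a singleton for all $0\neq s\in T$. $\Gamma$ is homogeneous if the Apéry set $\mathrm{Ap}(\Gamma,n_1)=\{s\in\Gamma: s-n_1\notin\Gamma\}$ is homogeneous. *)

(* Defs.v *)
From mathcomp Require Import all_boot.
Unset Strict Implicit. Unset Printing Implicit Defensive.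

(* A numerical semigroup is given by its list of generators [gens] = [n_1; ...; n_e]. *)

Definition factorization (gens : seq nat) (s : nat) (r : 'I_(size gens) -> nat) : Prop :=
  s = \sum_(i < size gens) r i * nth 0 gens i.

Definition in_semigroup (gens : seq nat) (s : nat) : Prop :=
  exists r : 'I_(size gens) -> nat, factorization gens s r.

Definition in_lengths (gens : seq nat) (s l : nat) : Prop :=
  exists r : 'I_(size gens) -> nat, factorization gens s r /\ l = \sum_(i < size gens) r i.

Definition homogeneous_set (gens : seq nat) (T : nat -> Prop) : Prop :=
  (forall s, ~ T s) \/
  (forall s, T s -> s <> 0 -> exists l, forall l', in_lengths gens s l' <-> l' = l).

(* Apery set Ap(Gamma, n) = { s in Gamma | s - n notin Gamma } (s - n taken in Z,
   so s < n means s - n is negative hence not in Gamma). *)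
Definition apery (gens : seq nat) (n : nat) (s : nat) : Prop :=
  in_semigroup gens s /\ ~ (n <= s /\ in_semigroup gens (s - n)).

Definition homogeneous_semigroup (gens : seq nat) : Prop :=
  homogeneous_set gens (apery gens (head 0 gens)).

Definition gens_A (h : nat) : seq nat :=
  [:: h * (h + 1); h * (h + 1) + 1; (h + 1) ^ 2; (h + 1) ^ 2 + 1].

(* Main.v *)
Require Import Defs.
From mathcomp Require Import all_boot zify ring.

Lemma sumE h (F : 'I_(size (gens_A h)) -> nat) :
  \sum_(i < size (gens_A h)) F i =
  F ord0 + F (lift ord0 ord0) + F (lift ord0 (lift ord0 ord0)) + F (lift ord0 (lift ord0 (lift ord0 ord0))).
Proof. rewrite !big_ord_recl big_ord0 /=. lia. Qed.

Lemma factE h s r : factorization (gens_A h) s r <->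
  s = r ord0 * (h*(h+1)) + r (lift ord0 ord0) * (h*(h+1)+1) + r (lift ord0 (lift ord0 ord0)) * ((h+1)^2)
     + r (lift ord0 (lift ord0 (lift ord0 ord0))) * ((h+1)^2+1).
Proof. by rewrite /factorization sumE. Qed.

Lemma witness h s p q u v : s = p * (h*(h+1)) + q * (h*(h+1)+1) + u * ((h+1)^2) + v * ((h+1)^2+1) ->
  in_semigroup (gens_A h) s.
Proof.
move=> ->. exists (fun i : 'I_(size (gens_A h)) => nth 0 [:: p; q; u; v] i).
by rewrite factE.
Qed.

Lemma core h w x y z : 2 <= h ->
  ~ (h*(h+1) <= w * (h*(h+1)) + x * (h*(h+1)+1) + y * ((h+1)^2) + z * ((h+1)^2+1) /\
     in_semigroup (gens_A h) (w * (h*(h+1)) + x * (h*(h+1)+1) + y * ((h+1)^2) + z * ((h+1)^2+1) - h*(h+1))) ->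
  w + x + y + z = (w * (h*(h+1)) + x * (h*(h+1)+1) + y * ((h+1)^2) + z * ((h+1)^2+1)) %/ (h*(h+1)).
Proof.
move=> h2 N.
have red : forall p q u v, w * (h*(h+1)) + x * (h*(h+1)+1) + y * ((h+1)^2) + z * ((h+1)^2+1)
   = h*(h+1) + (p * (h*(h+1)) + q * (h*(h+1)+1) + u * ((h+1)^2) + v * ((h+1)^2+1)) -> False.
  move=> p q u v E; apply: N; rewrite E addKn; split; first exact: leq_addr.
  exact: witness.
case: w N red => [|w] N red; last by case: (red w x y z); ring.
have yz : y + z < h.
  rewrite ltnNge; apply/negP => hyz.
  pose k := h - minn z h.
  have ky : k <= y by rewrite /k; lia.
  have kz : h - k <= z by rewrite /k; lia.
  have kh : k <= h by rewrite /k; lia.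
  apply: (red k (x + (h-k)) (y-k) (z-(h-k))).
  rewrite -(subnKC ky) -(subnKC kz) -(subnKC kh) !addKn. ring.
have n0 : 0 < h*(h+1) by rewrite muln_gt0; lia.
have divL : forall L e, e < h*(h+1) -> (L*(h*(h+1)) + e) %/ (h*(h+1)) = L.
  by move=> L e he; rewrite divnMDl // divn_small // addn0.
case: x N red => [|x] N red.
- rewrite [in RHS](_ : _ + _ = (y+z)*(h*(h+1)) + ((h+1)*y + (h+2)*z)); last by ring.
  rewrite divL; first lia.
  have : (h+1)*y + (h+2)*z <= (h+2)*(y+z) by nia.
  have : (h+2)*(y+z) <= (h+2)*(h-1) by apply: leq_mul => //; lia.
  nia.
- case: y N red yz => [|y] N red yz; last by case: (red 0 x y z.+1); ring.
  have [hx|hx] := leqP (x.+1 + z) h.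
  + rewrite [in RHS](_ : _ + _ = (x.+1+z)*(h*(h+1)) + (x.+1 + (h+2)*z)); last by ring.
    rewrite divL; first lia.
    have : (h+1)*z <= (h+1)*(h-1) by apply: leq_mul => //; lia.
    nia.
  + exfalso.
    have [t ht] : exists t, h = z + 1 + t by exists (h - z - 1); lia.
    have [q hq] : exists q, x = t + 1 + q by exists (x - t - 1); lia.
    subst h x.
    apply: (red t q (z+1) 0). ring.
Qed.

Theorem mainTheorem5 (h : nat) : 2 <= h -> homogeneous_semigroup (gens_A h).
Proof.
move=> h2; right => s [[r Hr] Hnot] _.
have key : forall r', factorization (gens_A h) s r' ->
    \sum_(i < size (gens_A h)) r' i = s %/ (h*(h+1)).
  move=> r' F; have E := F; move/factE: E => E.
  rewrite sumE [in RHS]E; apply: core => //; by rewrite -E.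
exists (s %/ (h*(h+1))) => l'; split.
- by case=> r' [F ->]; apply: key.
- by move=> ->; exists r; split => //; rewrite key.
Qed.
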